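(* Let $H=F[1/t]\subseteq\mathbb{Q}[t,1/t]$. Then $H$ equals the set of all $f(t)\in\mathbb{Q}[t,1/t]$ such that $f(a)\in\mathbb{Z}[1/a]$ for every positive integer $a$.
   Context: $F\subseteq\mathbb{Q}[t]$ is the ring of numerical polynomials, i.e. polynomials $f(t)\in\mathbb{Q}[t]$ with $f(n)\in\mathbb{Z}$ for all integers $n\gg0$; it is free abelian with basis $\alpha_n=\binom tn$, $n\ge0$. $H=F[1/t]$ is the localization of $F$ at $t$, viewed as a subring of $\mathbb{Q}[t,1/t]$. *)

(* Defs.v *)
From mathcomp Require Import all_boot all_order all_algebra.
Set Implicit Arguments. Unset Strict Implicit. Unset Printing Implicit Defensive.
Import Order.TTheory GRing.Theory Num.Theory.
Local Open Scope ring_scope.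

(* A Laurent polynomial in Q[t,1/t] is represented as p(t) / t^n with
   p : {poly rat}, n : nat (the pair (p, n)). *)

Definition numerical (g : {poly rat}) : Prop :=
  exists N : int, forall k : int, N <= k -> exists z : int, g.[k%:~R] = z%:~R.

(* p / t^n lies in H = F[1/t] = { g / t^m : g in F, m in N },
   i.e. p / t^n = g / t^m in Q[t,1/t], i.e. p * t^m = g * t^n. *)
Definition in_H (p : {poly rat}) (n : nat) : Prop :=
  exists (g : {poly rat}) (m : nat), numerical g /\ p * 'X^m = g * 'X^n.

Definition in_Z_inv (a : nat) (x : rat) : Prop :=
  exists (z : int) (k : nat), x = z%:~R / (a%:R) ^+ k.

(* Main.v *)
Require Import Defs.
From mathcomp Require Import all_boot all_order all_algebra.
From mathcomp Require Import zify ring.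
Import Order.TTheory GRing.Theory Num.Theory.
Local Open Scope ring_scope.

Lemma dvd_pow (d D a k : nat) : (0 < D)%N -> (0 < a)%N -> (d %| D)%N -> (d %| a ^ k)%N -> (d %| a ^ D)%N.
Proof.
move=> D0 a0 dD dak.
have d0 : (0 < d)%N by apply: dvdn_gt0 dD.
have aD0 : (0 < a ^ D)%N by rewrite expn_gt0 a0.
suff <- : lcmn d (a ^ D) = (a ^ D)%N by apply: dvdn_lcml.
apply: eqn_from_log => [|//|p]; first by rewrite lcmn_gt0 d0 aD0.
rewrite logn_lcm //; apply/maxn_idPr.
rewrite lognX.
have h1 := dvdn_leq_log p D0 dD.
have h2 : (logn p d <= k * logn p a)%N.
  by rewrite -lognX; apply: dvdn_leq_log => //; rewrite expn_gt0 a0.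
have h3 := ltn_logl p D0.
case: (posnP (logn p a)) => [e|pos]; first by move: h2; rewrite e !muln0.
nia.
Qed.
Lemma den_exists (p : {poly rat}) : exists D : nat, (0 < D)%N /\
  forall x : rat, x \is a Num.int -> (D%:R * p.[x]) \is a Num.int.
Proof.
elim/poly_ind: p => [|q c [D [D0 HD]]].
  by exists 1%N; split => // x _; rewrite horner0 mulr0.
have [d hd] := denqP c.
exists (D * d.+1)%N; split; first by rewrite muln_gt0 D0.
move=> x xi; rewrite hornerMXaddC natrM.
have -> : D%:R * d.+1%:R * (q.[x] * x + c) =
   (D%:R * q.[x]) * x * d.+1%:R + D%:R * (d.+1%:R * c) by ring.
apply: rpredD.
  by apply: rpredM; [apply: rpredM; [exact: HD|exact: xi]|exact: natr_int].
apply: rpredM; first exact: natr_int.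
have e : d.+1%:R * c = (numq c)%:~R by rewrite numqE hd mulrC.
by rewrite e; apply: intr_int.
Qed.
Lemma intval (g : {poly rat}) (N : int) :
  (forall k : int, N <= k -> g.[k%:~R] \is a Num.int) ->
  forall k : int, g.[k%:~R] \is a Num.int.
Proof.
suff: forall n (g : {poly rat}), (size g <= n)%N ->
  (forall k : int, N <= k -> g.[k%:~R] \is a Num.int) ->
  forall k : int, g.[k%:~R] \is a Num.int by move=> /(_ _ g (leqnn _)).
elim=> [|n IH] {}g.
  by move=> /size_poly_leq0P -> _ k; rewrite horner0 rpred0.
move=> sg Hg.
set h := g \Po ('X + 1%:P) - g.
have hE : forall x, h.[x] = g.[x + 1] - g.[x].
  by move=> x; rewrite /h hornerD hornerN horner_comp hornerD hornerX hornerC.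
have sc : size (g \Po ('X + 1%:P)) = size g by rewrite size_comp_poly2 // size_XaddC.
have sh : (size h <= n)%N.
  apply/leq_sizeP => j hj; rewrite /h coefB.
  have [sgn|sgn] := leqP (size g) n.
    by rewrite !nth_default ?subrr // ?sc; apply: leq_trans sgn hj.
  have e : size g = n.+1 by apply/eqP; rewrite eqn_leq sg sgn.
  case: (ltngtP j n) => [|jn|->]; first by rewrite ltnNge hj.
    by rewrite !nth_default ?subrr // ?sc e.
  have := @lead_coef_comp _ g ('X + 1%:P).
  rewrite size_XaddC lead_coefXaddC expr1n mulr1 => /(_ isT).
  by rewrite !lead_coefE sc e /= => ->; rewrite subrr.
have Hh : forall k : int, h.[k%:~R] \is a Num.int.
  apply: IH sh _ => k Nk; rewrite hE.
  have -> : (k%:~R + 1 : rat) = (k + 1)%:~R by rewrite intrD.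
  by apply: rpredB; apply: Hg => //; lia.
have down : forall j : nat, g.[(N - j%:Z)%:~R] \is a Num.int.
  elim=> [|j IHj]; first by rewrite subr0; apply: Hg.
  have e : g.[(N - j.+1%:Z)%:~R] = g.[(N - j%:Z)%:~R] - h.[(N - j.+1%:Z)%:~R].
    rewrite hE intrB intrB.
    have -> : ((N%:~R - (j.+1%:Z)%:~R + 1) : rat) = N%:~R - (j%:Z)%:~R.
      have -> : ((j.+1%:Z)%:~R : rat) = (j%:Z)%:~R + 1.
        by rewrite -addn1 PoszD intrD.
      by ring.
    by ring.
  by rewrite e; apply: rpredB.
move=> k; have [Nk|kN] := lerP N k; first exact: Hg.
have -> : k = N - (`|N - k|%N)%:Z by rewrite gez0_abs ?subr_ge0 ?ltW //; lia.
exact: down.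
Qed.

Theorem lemma1p2 (p : {poly rat}) (n : nat) :
  in_H p n <->
  (forall a : nat, (0 < a)%N -> in_Z_inv a (p.[a%:R] / (a%:R) ^+ n)).
Proof.
split.
  move=> [g [m [[N Hg] E]]] a a0.
  have Hg' : forall k : int, N <= k -> g.[k%:~R] \is a Num.int.
    by move=> k /Hg [z ->]; apply: intr_int.
  have /intrP [z gz] := @intval g N Hg' (a%:Z).
  exists z, m.
  have an0 : (a%:R : rat) != 0 by rewrite pnatr_eq0 -lt0n.
  apply/eqP; rewrite eqr_div ?expf_neq0 //.
  have := congr1 (horner^~ (a%:R : rat)) E; rewrite /= !hornerM !hornerXn.
  by rewrite -gz => ->.
move=> H.
have [D [D0 HD]] := den_exists p.
exists (p * 'X^D), (D + n)%N; split; last by rewrite exprD mulrA.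
exists 1 => k k1.
have [a ea] : exists a : nat, k = a%:Z by exists `|k|%N; rewrite gez0_abs //; lia.
subst k.
have a0 : (0 < a)%N by lia.
apply/intrP.
rewrite hornerM hornerXn.
have [z [j e]] := H a a0.
have an0 : (a%:R : rat) != 0 by rewrite pnatr_eq0 -lt0n.
set x := p.[a%:R] in e *.
have h1 : (a ^ j)%:R * x \is a Num.int.
  have -> : (a ^ j)%:R * x = z%:~R * (a%:R) ^+ n.
    move/eqP: e; rewrite eqr_div ?expf_neq0 // => /eqP e.
    by rewrite natrX mulrC e.
  by apply: rpredM; [exact: intr_int| rewrite -natrX; exact: natr_int].
have h2 : D%:R * x \is a Num.int by apply: HD; exact: natr_int.
have [u [v uv]] := Bezoutz (D%:Z) ((a ^ j)%N%:Z).
have h3 : (gcdn D (a ^ j))%:R * x \is a Num.int.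
  have -> : (gcdn D (a ^ j))%:R * x = u%:~R * (D%:R * x) + v%:~R * ((a ^ j)%:R * x).
    have -> : ((gcdn D (a ^ j))%:R : rat) = (gcdz D (a ^ j)%N)%:~R by [].
    rewrite -uv intrD !intrM.
    have -> : ((D%:Z)%:~R : rat) = D%:R by [].
    have -> : (((a ^ j)%N%:Z)%:~R : rat) = (a ^ j)%:R by [].
    by ring.
  by apply: rpredD; apply: rpredM => //; exact: intr_int.
have dv : (gcdn D (a ^ j) %| a ^ D)%N.
  by apply: dvd_pow (dvdn_gcdl _ _) (dvdn_gcdr _ _).
have [ee eE] := dvdnP dv.
rewrite -natrX eE natrM mulrC -mulrA; apply: rpredM h3.
exact: natr_int.
Qed.
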